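(* Let $s\ge 1$, $q=4^{2s}$, and let $\theta$ be the automorphism of $F_q$ given by $\theta(a)=a^{4^s}$. Let $n$ be odd and let $C$ be a skew cyclic code of length $n$ over $F_q$ generated by a (right) divisor of $x^n-1$ in $F_q[x;\theta]$. If $C$ is a reversible DNA code, then its dual code $C^\perp$ is also a reversible DNA code.
   Context: $F_q[x;\theta]$ is the skew polynomial ring with multiplication determined by $xa=\theta(a)x$. A skew cyclic code of length $n$ is a linear code $C\subseteq F_q^n$ such that $(\theta(c_{n-1}),\theta(c_0),\ldots,\theta(c_{n-2}))\in C$ whenever $(c_0,\ldots,c_{n-1})\in C$; such codes correspond to left $F_q[x;\theta]$-submodules of $F_q[x;\theta]/(x^n-1)$ via $(c_0,\ldots,c_{n-1})\mapsto\sum c_ix^i$. $C^\perp$ is the dual with respect to the standard inner product on $F_q^n$. DNA correspondence: there is a fixed bijection $\tau:F_{4^{2s}}\to\{A,T,G,C\}^{2s}$ such that for every $\beta$, $\tau(\beta^{4^s})$ is the reverse of the string $\tau(\beta)$; it extends to $\phi:F_q^n\to\{A,T,G,C\}^{2sn}$ by concatenation. A code $C\subseteq F_q^n$ is a reversible DNA code if the reverse string $\phi(c)^r$ lies in $\phi(C)$ for all $c\in C$; equivalently, $(\theta(c_{n-1}),\ldots,\theta(c_1),\theta(c_0))\in C$ for every $(c_0,\ldots,c_{n-1})\in C$. *)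

(* Defs.v *)
From HB Require Import structures.
From mathcomp Require Import all_boot all_order all_algebra.
Set Implicit Arguments. Unset Strict Implicit. Unset Printing Implicit Defensive.
Import GRing.Theory.
Local Open Scope ring_scope.

(* Skew polynomials over F with respect to an endomorphism theta are
   represented by their coefficient sequences, i.e. by {poly F} (additive
   structure), with the skew product determined by x a = theta(a) x:
   (sum_i p_i x^i)(sum_j q_j x^j) = sum_{i,j} p_i theta^i(q_j) x^{i+j}. *)
Definition skmul (F : fieldType) (theta : F -> F) (p q : {poly F}) : {poly F} :=
  \poly_(k < (size p + size q).-1)
     \sum_(i < k.+1) p`_i * iter i theta (q`_(k - i)).

Definition theta_s (F : fieldType) (s : nat) (a : F) : F := a ^+ (4 ^ s).

Definition code (F : fieldType) (n : nat) := 'rV[F]_n -> Prop.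

Definition linear_code (F : fieldType) n (C : code F n) : Prop :=
  C 0 /\ (forall (a : F) u v, C u -> C v -> C (a *: u + v)).

Definition vec_poly (F : fieldType) n (c : 'rV[F]_n) : {poly F} :=
  \sum_(i < n) c 0 i *: 'X^i.

(* entry of a word at a natural-number index (0 outside range) *)
Definition vget (F : fieldType) n (c : 'rV[F]_n) (k : nat) : F :=
  nth 0 [seq c 0 j | j <- enum 'I_n] k.

(* skew cyclic: (theta c_{n-1}, theta c_0, ..., theta c_{n-2}) in C *)
Definition skew_cyclic (F : fieldType) (theta : F -> F) n (C : code F n) : Prop :=
  linear_code C /\
  forall c, C c ->
    C (\row_(i < n) theta (vget c ((i + n.-1) %% n))).

(* The skew cyclic code generated by g: the left F[x;theta]-submodule of
   F[x;theta]/F[x;theta](x^n - 1) generated by the class of g, transported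
   to F^n via (c_0,...,c_{n-1}) |-> sum c_i x^i. *)
Definition gen_code (F : fieldType) (theta : F -> F) n (g : {poly F}) : code F n :=
  fun c => exists f k : {poly F},
    vec_poly c = skmul theta f g + skmul theta k ('X^n - 1).

Definition skew_rdivides (F : fieldType) (theta : F -> F) (g p : {poly F}) : Prop :=
  exists h, skmul theta h g = p.

Definition dual_code (F : fieldType) n (C : code F n) : code F n :=
  fun v => forall c, C c -> \sum_(i < n) v 0 i * c 0 i = 0.

Inductive nucleotide := nA | nT | nG | nC.

Definition phi (F : fieldType) (s n : nat) (tau : F -> (2 * s).-tuple nucleotide)
  (c : 'rV[F]_n) : seq nucleotide :=
  flatten [seq tval (tau (c 0 i)) | i <- enum 'I_n].

Definition DNA_corr (F : fieldType) (s : nat) (tau : F -> (2 * s).-tuple nucleotide) : Prop :=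
  bijective tau /\ forall b : F, tval (tau (b ^+ (4 ^ s))) = rev (tval (tau b)).

Definition reversible_DNA (F : fieldType) s n (tau : F -> (2 * s).-tuple nucleotide)
  (C : code F n) : Prop :=
  forall c, C c -> exists c', C c' /\ phi tau c' = rev (phi tau c).

Arguments gen_code {F} theta n g _.

(* Main.v *)
Require Import Defs.
From HB Require Import structures.
From mathcomp Require Import all_boot all_order all_algebra all_field zify.
Import GRing.Theory.
Local Open Scope ring_scope.

Section Aux.
Variable (F : finFieldType) (s : nat).
Hypothesis cardF : #|F| = (4 ^ (2 * s))%N.

Lemma char2 : (2 \in [pchar F])%N.
Proof.
apply: (@card_finPcharP F 2 (4 * s)) => //.
by rewrite cardF -[4%N]/(2^2)%N -expnM mulnA.
Qed.

Lemma exp2D k (x y : F) : (x + y) ^+ (2 ^ k) = x ^+ (2 ^ k) + y ^+ (2 ^ k).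
Proof.
elim: k => [|k IH]; first by rewrite !expr1.
rewrite expnSr !exprM IH.
have := pFrobenius_autD_comm char2 (mulrC (x ^+ (2 ^ k)) (y ^+ (2 ^ k))).
by rewrite !pFrobenius_autE.
Qed.

Lemma thetaD (x y : F) : theta_s s (x + y) = theta_s s x + theta_s s y.
Proof. by rewrite /theta_s -[4%N]/(2^2)%N -expnM exp2D. Qed.

Lemma theta0 : theta_s s (0 : F) = 0.
Proof. by rewrite /theta_s expr0n expn_eq0. Qed.

Lemma thetaM (x y : F) : theta_s s (x * y) = theta_s s x * theta_s s y.
Proof. by rewrite /theta_s exprMn. Qed.

Lemma thetaK (x : F) : theta_s s (theta_s s x) = x.
Proof. by rewrite /theta_s -exprM -expnD addnn -mul2n -cardF expf_card. Qed.

Lemma theta_sum n (f : 'I_n -> F) :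
  theta_s s (\sum_(i < n) f i) = \sum_(i < n) theta_s s (f i).
Proof.
elim/big_rec2: _ => [|i a b _ <-]; first exact: theta0.
by rewrite thetaD.
Qed.
End Aux.

Definition Rv (F : fieldType) s n (v : 'rV[F]_n) : 'rV[F]_n :=
  \row_(i < n) theta_s s (v 0 (rev_ord i)).
Arguments Rv {F} s {n} v.

Lemma phi_inj (F : fieldType) s n (tau : F -> (2 * s).-tuple nucleotide)
  (c1 c2 : 'rV[F]_n) : injective tau -> phi tau c1 = phi tau c2 -> c1 = c2.
Proof.
move=> taui; rewrite /phi => E.
have Hs : forall c : 'rV[F]_n,
  shape [seq tval (tau (c 0 i)) | i <- enum 'I_n] = nseq n (2 * s)%N.
  move=> c; rewrite /shape -map_comp.
  rewrite (@eq_map _ _ _ (fun=> (2 * s)%N)); last by move=> i /=; rewrite size_tuple.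
  rewrite -[n in nseq n _](size_enum_ord n); by elim: (enum 'I_n) => //= ? ? ->.
have := flattenK [seq tval (tau (c1 0 i)) | i <- enum 'I_n].
rewrite E Hs -(Hs c2) flattenK => E2.
apply/matrixP => a i; rewrite [a]ord1.
have := congr1 (fun l => nth [::] l i) E2.
rewrite /= !(nth_map i) -?enumT ?size_enum_ord ?nth_ord_enum //.
by move/val_inj/taui.
Qed.

Lemma phi_R (F : fieldType) s n (tau : F -> (2 * s).-tuple nucleotide)
  (v : 'rV[F]_n) : DNA_corr tau -> phi tau (Rv s v) = rev (phi tau v).
Proof.
case=> _ Ht; rewrite /phi rev_flatten; congr flatten.
apply: (@eq_from_nth _ [::]); first by rewrite size_rev !size_map.
rewrite size_map -?enumT size_enum_ord => i Hi.
pose j := Ordinal Hi; rewrite -[i]/(val j).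
rewrite (nth_map j) -?enumT ?size_enum_ord // nth_ord_enum.
rewrite nth_rev !size_map -?enumT ?size_enum_ord //.
rewrite (nth_map [::]) ?size_map -?enumT ?size_enum_ord ?subnSK //.
rewrite (nth_map j) -?enumT ?size_enum_ord ?subnSK //.
rewrite mxE /theta_s Ht; congr (rev (tval (tau (v 0 _)))).
apply: val_inj; rewrite /= nth_enum_ord //.
all: rewrite /=; lia.
Qed.

Theorem theorem7 (s : nat) (F : finFieldType) (n : nat)
  (tau : F -> (2 * s).-tuple nucleotide) (g : {poly F}) :
  (1 <= s)%N ->
  #|F| = (4 ^ (2 * s))%N ->
  DNA_corr tau ->
  odd n ->
  skew_rdivides (theta_s s) g ('X^n - 1) ->
  skew_cyclic (theta_s s) (gen_code (theta_s s) n g) ->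
  reversible_DNA tau (gen_code (theta_s s) n g) ->
  reversible_DNA tau (dual_code (gen_code (theta_s s) n g)).
Proof.
move=> s1 cardF Hdna _ _ _ Hrev.
have [[tinv taucK _] Ht] := Hdna.
have taui : injective tau by apply: can_inj taucK.
set C := gen_code _ n g in Hrev *.
have RC : forall c, C c -> C (Rv s c).
  move=> c /Hrev [c' [Cc' E]].
  by rewrite -(@phi_inj _ _ _ _ _ _ taui (_ : phi tau c' = phi tau (Rv s c))) // phi_R.
move=> v Dv; exists (Rv s v); split; last by rewrite phi_R.

move=> c Cc.
have Cd := RC c Cc.
have := congr1 (theta_s s) (Dv _ Cd).
rewrite theta0 => H; rewrite -[RHS]H.
rewrite (@theta_sum _ _ cardF) (reindex_inj rev_ord_inj) /=.
apply: eq_bigr => i _.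
by rewrite thetaM !mxE rev_ordK (@thetaK _ _ cardF).
Qed.
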